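(* Let $A$ be a unital $\Bbbk$-algebra which is a domain, and for $k=1,\dots,m$ let $\varphi_k$ be algebra automorphisms and $\partial_k$ locally nilpotent skew derivations of $A$ with respect to $\varphi_k$, such that $\partial_\ell\circ\varphi_k=q_{k\ell}\,\varphi_k\circ\partial_\ell$ for all $1\le k,\ell\le m$, where $\widehat{\mathbf q}=(q_{k\ell})$ is an $m\times m$ matrix over $\Bbbk^\times$ and each $q_{kk}$ is not a root of unity. Let $\varepsilon:A\to\Bbbk$ be an algebra homomorphism with $\varepsilon\circ\varphi_k=\varepsilon$ for all $k$. Let $A_{\mathbf q}$ be the $\Bbbk$-algebra generated by $t_1,\dots,t_m$ subject to $t_\ell t_k=q_{k\ell}t_kt_\ell$ for $k<\ell$. Then $$\Phi(x)=\sum_{a\in\mathbb Z_{\ge0}^m}\varepsilon\big(\partial_m^{(a_m)}\cdots\partial_1^{(a_1)}(x)\big)\,t_1^{a_1}\cdots t_m^{a_m}$$ (a finite sum) defines an algebra homomorphism $\Phi:A\to A_{\mathbf q}$.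
   Context: A skew derivation with respect to $\varphi$ is a linear map $\partial$ with $\partial(ab)=\partial(a)b+\varphi(a)\partial(b)$; locally nilpotent means every element is killed by some power. Divided powers: $\partial_k^{(n)}=\frac{1}{[n]_{q_{kk}}!}\partial_k^n$ with $[n]_r!=\prod_{\ell=1}^n\frac{1-r^\ell}{1-r}$. *)

(* Defs.v *)
From HB Require Import structures.
From mathcomp Require Import all_boot all_order all_algebra.
Set Implicit Arguments. Unset Strict Implicit. Unset Printing Implicit Defensive.
Import Order.TTheory GRing.Theory.
Local Open Scope ring_scope.

(* no zero divisors (A need not be commutative) *)
Definition is_domain (R : nzRingType) : Prop :=
  forall x y : R, x * y = 0 -> x = 0 \/ y = 0.

Definition is_alg_hom (k : fieldType) (A B : algType k) (f : A -> B) : Prop :=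
  [/\ forall (c : k) (x y : A), f (c *: x + y) = c *: f x + f y,
      f 1 = 1 &
      forall x y : A, f (x * y) = f x * f y].

Definition is_alg_aut (k : fieldType) (A : algType k) (f : A -> A) : Prop :=
  is_alg_hom f /\ bijective f.

Definition is_alg_char (k : fieldType) (A : algType k) (e : A -> k) : Prop :=
  [/\ forall (c : k) (x y : A), e (c *: x + y) = c * e x + e y,
      e 1 = 1 &
      forall x y : A, e (x * y) = e x * e y].

Definition is_skew_der (k : fieldType) (A : algType k) (phi d : A -> A) : Prop :=
  (forall (c : k) (x y : A), d (c *: x + y) = c *: d x + d y) /\
  (forall x y : A, d (x * y) = d x * y + phi x * d y).

Definition locally_nilpotent (A : nzRingType) (d : A -> A) : Prop :=
  forall x : A, exists n : nat, iter n d x = 0.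

Definition is_root_of_unity_q (k : fieldType) (r : k) : Prop :=
  exists n : nat, (0 < n)%N /\ r ^+ n = 1.

Definition qfact (k : fieldType) (r : k) (n : nat) : k :=
  \prod_(1 <= l < n.+1) ((1 - r ^+ l) / (1 - r)).

Definition dpow (k : fieldType) (A : algType k) (r : k) (d : A -> A) (n : nat)
  (x : A) : A := (qfact r n)^-1 *: iter n d x.

(* d_m^{(a_m)} o ... o d_1^{(a_1)} applied to x (d_1 applied first);
   the divided power of d_i uses q_ii *)
Definition dcomp (k : fieldType) (A : algType k) (m : nat) (q : 'M[k]_m)
  (d : 'I_m -> A -> A) (a : 'I_m -> nat) (x : A) : A :=
  foldl (fun y i => dpow (q i i) (d i) (a i) y) x (enum 'I_m).

Definition Phi_coef (k : fieldType) (A : algType k) (m : nat) (q : 'M[k]_m)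
  (d : 'I_m -> A -> A) (eps : A -> k) (a : 'I_m -> nat) (x : A) : k :=
  eps (dcomp q d a x).

Definition coef_support_in_box (k : fieldType) (A : algType k) (m : nat)
  (q : 'M[k]_m) (d : 'I_m -> A -> A) (eps : A -> k) (N : nat) (x : A) : Prop :=
  forall a : 'I_m -> nat, (exists i, (N <= a i)%N) -> Phi_coef q d eps a x = 0.

Definition Phi_box (k : fieldType) (A B : algType k) (m : nat) (q : 'M[k]_m)
  (d : 'I_m -> A -> A) (eps : A -> k) (t : 'I_m -> B) (N : nat) (x : A) : B :=
  \sum_(a : {ffun 'I_m -> 'I_N})
     Phi_coef q d eps (fun i => nat_of_ord (a i)) x *:
       \prod_(i < m) t i ^+ nat_of_ord (a i).

(* Main.v *)
Require Import Defs.
From HB Require Import structures.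
From mathcomp Require Import all_boot all_order all_algebra.
From Stdlib Require Import FunctionalExtensionality.
From mathcomp Require Import zify.
Set Implicit Arguments. Unset Strict Implicit. Unset Printing Implicit Defensive.
Import GRing.Theory.
Local Open Scope ring_scope.

Lemma sum_trunc (V : zmodType) (g : nat -> V) n1 n2 :
  (n1 <= n2)%N -> (forall c, (n1 <= c)%N -> g c = 0) ->
  \sum_(c < n2) g c = \sum_(c < n1) g c.
Proof.
move=> h hg; rewrite (big_ord_widen n2 g h) [RHS]big_mkcond /=.
apply: eq_bigr => i _; case: ifP => // /negbT; rewrite -leqNgt => h'.
by rewrite hg.
Qed.

Lemma cauchy_reindex (R : nzRingType) (u v : nat -> R) N :
  \sum_(a < N) \sum_(j < a.+1) u (a - j)%N * v j =
  \sum_(b < N) \sum_(c < N - b) u b * v c.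
Proof.
elim: N => [|N IH]; first by rewrite !big_ord0.
rewrite big_ord_recr /= IH.
have -> : \sum_(b < N.+1) \sum_(c < N.+1 - b) u b * v c =
   \sum_(b < N.+1) (\sum_(c < N - b) u b * v c + u b * v (N - b)%N).
  apply: eq_bigr => b _; rewrite subSn; last by rewrite -ltnS.
  by rewrite big_ord_recr.
rewrite big_split /= [X in _ = X + _]big_ord_recr /= subnn big_ord0 addr0.
congr (_ + _).
rewrite (reindex_inj rev_ord_inj) /=; apply: eq_bigr => j _.
by rewrite subSS subKn // -ltnS.
Qed.

Lemma cauchy (R : nzRingType) (u v : nat -> R) nx ny N :
  (nx + ny <= N)%N -> (forall b, (nx <= b)%N -> u b = 0) ->
  (forall c, (ny <= c)%N -> v c = 0) ->
  \sum_(a < N) \sum_(j < a.+1) u (a - j)%N * v j =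
  (\sum_(b < N) u b) * (\sum_(c < N) v c).
Proof.
move=> hN hu hv; rewrite cauchy_reindex mulr_suml; apply: eq_bigr => b _.
rewrite mulr_sumr.
case: (leqP nx b) => hb.
  by rewrite !big1 // => c _; rewrite hu // mul0r.
rewrite (@sum_trunc _ (fun c => u b * v c) ny); last first.
- by move=> c hc; rewrite hv // mulr0.
- by move: hN hb; clear; lia.
rewrite [RHS](@sum_trunc _ (fun c => u b * v c) ny) //.
- by move: hN hb; clear; lia.
- by move=> c hc; rewrite hv // mulr0.
Qed.

Section Main.
Variables (k : fieldType) (A : algType k) (B : algType k) (m : nat).
Variables (phi d : 'I_m -> A -> A) (q : 'M[k]_m) (eps : A -> k) (t : 'I_m -> B).
Hypothesis hphi : forall i, is_alg_aut (phi i).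
Hypothesis hder : forall i, is_skew_der (phi i) (d i).
Hypothesis hnil : forall i, locally_nilpotent (d i).
Hypothesis hcomm : forall i l x, d l (phi i x) = q i l *: phi i (d l x).
Hypothesis hroot : forall i : 'I_m, ~ is_root_of_unity_q (q i i).
Hypothesis heps : is_alg_char eps.
Hypothesis hepsphi : forall i x, eps (phi i x) = eps x.
Hypothesis ht : forall i l : 'I_m, (i < l)%N -> t l * t i = q i l *: (t i * t l).

Definition islin (f : A -> A) := forall (c : k) (x y : A), f (c *: x + y) = c *: f x + f y.

Lemma lin0 f : islin f -> f 0 = 0.
Proof.
move=> H; have h := H 1 0 0; rewrite !scale1r addr0 in h.
by apply: (@addrI _ (f 0)); rewrite addr0 -h.
Qed.

Lemma linD f x y : islin f -> f (x + y) = f x + f y.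
Proof. by move=> H; have := H 1 x y; rewrite !scale1r. Qed.

Lemma linZ f c x : islin f -> f (c *: x) = c *: f x.
Proof. by move=> H; have := H c x 0; rewrite !addr0 (lin0 H) addr0. Qed.

Lemma lin_iter f n : islin f -> islin (iter n f).
Proof.
move=> H; elim: n => [|n IH] c x y //=.
by rewrite IH H.
Qed.

Lemma lin_sum f n (F : 'I_n -> A) : islin f ->
  f (\sum_(i < n) F i) = \sum_(i < n) f (F i).
Proof.
move=> H; apply: (big_morph f (fun x y => linD x y H) (lin0 H)).
Qed.

Lemma iter0 f n : islin f -> iter n f 0 = 0.
Proof. by move=> H; rewrite (lin0 (lin_iter n H)). Qed.

Lemma iter_zero f n n' x : islin f -> iter n f x = 0 -> (n <= n')%N ->
  iter n' f x = 0.
Proof.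
move=> H h hn; rewrite -(subnK hn) iterD h iter0 //.
Qed.

Lemma d_lin i : islin (d i).
Proof. by case: (hder i). Qed.

Lemma phi_lin i : islin (phi i).
Proof. by case: (hphi i) => -[]. Qed.

Lemma phi1 i : phi i 1 = 1.
Proof. by case: (hphi i) => -[]. Qed.

Lemma d_mul i x y : d i (x * y) = d i x * y + phi i x * d i y.
Proof. by case: (hder i). Qed.

Lemma d1 i : d i 1 = 0.
Proof.
have := d_mul i 1 1; rewrite !mulr1 phi1 mul1r => h.
by apply: (@addrI _ (d i 1)); rewrite addr0 -h.
Qed.

Lemma eps_lin c x y : eps (c *: x + y) = c * eps x + eps y.
Proof. by case: heps. Qed.
Lemma eps1 : eps 1 = 1.
Proof. by case: heps. Qed.
Lemma eps_mul x y : eps (x * y) = eps x * eps y.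
Proof. by case: heps. Qed.
Lemma eps0 : eps 0 = 0.
Proof.
have := eps_lin 1 0 0; rewrite scale1r addr0 mul1r => h.
by apply: (@addrI _ (eps 0)); rewrite addr0 -h.
Qed.
Lemma epsZ c x : eps (c *: x) = c * eps x.
Proof. by have := eps_lin c x 0; rewrite addr0 eps0 addr0. Qed.

Definition P i n := iter n (phi i).
Definition D i n := dpow (q i i) (d i) n.

Lemma P_lin i n : islin (P i n).
Proof. exact: lin_iter (phi_lin i). Qed.

Lemma D_lin i n : islin (D i n).
Proof.
move=> c x y; rewrite /D /dpow (lin_iter n (d_lin i)) scalerDr !scalerA mulrC //.
Qed.

Lemma eps_P i n x : eps (P i n x) = eps x.
Proof. by elim: n => //= n IH; rewrite hepsphi. Qed.

Lemma dP i l c x : d l (P i c x) = (q i l) ^+ c *: P i c (d l x).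
Proof.
elim: c => [|c IH] /=; first by rewrite scale1r.
by rewrite hcomm IH (linZ _ _ (phi_lin i)) scalerA exprS.
Qed.

Lemma iterdP i l c e x :
  iter e (d l) (P i c x) = (q i l) ^+ (c * e) *: P i c (iter e (d l) x).
Proof.
elim: e => [|e IH] /=; first by rewrite muln0 scale1r.
rewrite IH (linZ _ _ (d_lin l)) dP scalerA /= -exprD.
by congr (_ ^+ _ *: _); rewrite mulnS addnC.
Qed.

Lemma DP i l c e x :
  D l e (P i c x) = (q i l) ^+ (c * e) *: P i c (D l e x).
Proof.
rewrite /D /dpow iterdP (linZ _ _ (P_lin i c)) !scalerA mulrC //.
Qed.

Definition br (r : k) (l : nat) : k := (1 - r ^+ l) / (1 - r).

Lemma br0 (r : k) : br r 0 = 0.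
Proof. by rewrite /br expr0 subrr mul0r. Qed.

Lemma qfS (r : k) n : qfact r n.+1 = qfact r n * br r n.+1.
Proof. by rewrite /qfact big_nat_recr. Qed.

Lemma qf0 (r : k) : qfact r 0 = 1.
Proof. by rewrite /qfact big_geq. Qed.

Lemma br_neq0 i l : (0 < l)%N -> br (q i i) l != 0.
Proof.
move=> hl; rewrite /br mulf_neq0 // ?invr_eq0 subr_eq0 eq_sym; apply/negP => /eqP h.
  by apply: (hroot (i := i)); exists l.
by apply: (hroot (i := i)); exists 1%N; rewrite expr1.
Qed.

Lemma qf_neq0 i n : qfact (q i i) n != 0.
Proof.
elim: n => [|n IH]; first by rewrite qf0 oner_neq0.
by rewrite qfS mulf_neq0 // br_neq0.
Qed.

Lemma dD i n z : d i (D i n z) = br (q i i) n.+1 *: D i n.+1 z.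
Proof.
rewrite /D /dpow (linZ _ _ (d_lin i)) iterS qfS scalerA invfM mulrCA mulfV ?mulr1 //.
exact: br_neq0.
Qed.

Lemma br_id (r : k) n j : (j <= n.+1)%N -> r != 1 ->
  r ^+ j * br r (n.+1 - j) + br r j = br r n.+1.
Proof.
move=> hj hr; rewrite /br mulrA -mulrDl; congr (_ / _).
rewrite mulrBr mulr1 -exprD subnKC //.
by rewrite addrC addrA subrK.
Qed.

Lemma D0 i z : D i 0 z = z.
Proof. by rewrite /D /dpow qf0 invr1 scale1r. Qed.

Lemma leibniz i n x y :
  D i n (x * y) = \sum_(j < n.+1) P i j (D i (n - j) x) * D i j y.
Proof.
elim: n => [|n IH]; first by rewrite big_ord1 /= !D0.
set T := fun j : nat => P i j (D i (n.+1 - j) x) * D i j y.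
set f := fun j : nat => (q i i ^+ j * br (q i i) (n.+1 - j)) *: T j.
set g := fun j : nat => br (q i i) j *: T j.
have hbr : br (q i i) n.+1 != 0 by apply: br_neq0.
have E1 : br (q i i) n.+1 *: D i n.+1 (x * y) = \sum_(j < n.+1) (f j + g j.+1).
  rewrite -dD IH (lin_sum _ (d_lin i)); apply: eq_bigr => j _.
  rewrite d_mul dP !dD (linZ _ _ (P_lin i j)) scalerA.
  rewrite -[(_ *: P i j _) * D i j y]scalerAl -[phi i _ * (br _ _ *: _)]scalerAr /f /g /T.
  rewrite -subSn; last by rewrite -ltnS.
  by rewrite subSS.
have E2 : \sum_(j < n.+1) (f j + g j.+1) = br (q i i) n.+1 *: \sum_(j < n.+2) T j.
  transitivity (\sum_(j < n.+2) (f j + g j)).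
    rewrite [RHS]big_split /= [X in _ = X + _]big_ord_recr [X in _ = _ + X]big_ord_recl /=.
    rewrite /f /g subnn br0 mulr0 scale0r addr0 scale0r add0r big_split /=.
    by congr (_ + _); apply: eq_bigr => j _; rewrite lift0.
  rewrite scaler_sumr; apply: eq_bigr => j _; rewrite /f /g -scalerDl br_id //.
    by rewrite -ltnS.
  by apply/negP => /eqP h; apply: (hroot (i := i)); exists 1%N; rewrite expr1.
have := etrans E1 E2 => h.
by rewrite -[LHS]scale1r -(mulVf hbr) -scalerA h scalerA mulVf // scale1r.
Qed.

Lemma ln_ex i x : exists n, iter n (d i) x == 0.
Proof. by have [n hn] := hnil i x; exists n; apply/eqP. Qed.

Definition nilidx i x := ex_minn (ln_ex i x).

Lemma nilidx0 i x : iter (nilidx i x) (d i) x = 0.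
Proof. by rewrite /nilidx; case: ex_minnP => n /eqP. Qed.

Lemma nilidx_min i x n : iter n (d i) x = 0 -> (nilidx i x <= n)%N.
Proof. by rewrite /nilidx; case: ex_minnP => n0 _ hmin h; apply: hmin; apply/eqP. Qed.

Lemma D_zero i c x : iter c (d i) x = 0 -> D i c x = 0.
Proof. by move=> h; rewrite /D /dpow h scaler0. Qed.

Lemma D_zero' i c x : (nilidx i x <= c)%N -> D i c x = 0.
Proof. by move=> h; apply: D_zero; apply: iter_zero (d_lin i) (nilidx0 i x) h. Qed.

Fixpoint Psi (s : seq 'I_m) (x : A) : B :=
  match s with
  | [::] => eps x *: 1
  | i :: s' => \sum_(c < nilidx i x) t i ^+ c * Psi s' (D i c x)
  end.

Lemma Psi0 s : Psi s 0 = 0.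
Proof.
case: s => [|i s] /=; first by rewrite eps0 scale0r.
have -> : nilidx i 0 = 0%N by apply/eqP; rewrite -leqn0 nilidx_min.
by rewrite big_ord0.
Qed.

Lemma Psi_valid s i x n : iter n (d i) x = 0 ->
  Psi (i :: s) x = \sum_(c < n) t i ^+ c * Psi s (D i c x).
Proof.
move=> h /=.
rewrite [RHS](@sum_trunc _ (fun c => t i ^+ c * Psi s (D i c x)) (nilidx i x) n) //.
  exact: nilidx_min.
by move=> c hc; rewrite D_zero' // Psi0 mulr0.
Qed.

Lemma Psi_lin s c x y : Psi s (c *: x + y) = c *: Psi s x + Psi s y.
Proof.
elim: s x y => [|i s IH] x y.
  by rewrite /= eps_lin scalerDl scalerA.
set n := (nilidx i x + nilidx i y + nilidx i (c *: x + y))%N.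
have hz : forall z, (nilidx i z <= n)%N -> iter n (d i) z = 0.
  by move=> z hz; apply: iter_zero (d_lin i) (nilidx0 i z) hz.
have h1 : iter n (d i) x = 0 by apply: hz; rewrite /n; lia.
have h2 : iter n (d i) y = 0 by apply: hz; rewrite /n; lia.
have h3 : iter n (d i) (c *: x + y) = 0 by apply: hz; rewrite /n; lia.
rewrite (Psi_valid s h1) (Psi_valid s h2) (Psi_valid s h3).
rewrite scaler_sumr -big_split /=; apply: eq_bigr => j _.
by rewrite D_lin IH mulrDr scalerAr.
Qed.

Lemma Psi_D s x y : Psi s (x + y) = Psi s x + Psi s y.
Proof. by have := Psi_lin s 1 x y; rewrite !scale1r. Qed.

Lemma Psi_Z s c x : Psi s (c *: x) = c *: Psi s x.
Proof. by have := Psi_lin s c x 0; rewrite !addr0 Psi0 addr0. Qed.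

Lemma Psi_sum s n (F : 'I_n -> A) :
  Psi s (\sum_(j < n) F j) = \sum_(j < n) Psi s (F j).
Proof. exact: (big_morph (Psi s) (Psi_D s) (Psi0 s)). Qed.

Lemma Psi_one s : Psi s 1 = 1.
Proof.
elim: s => [|i s IH]; first by rewrite /= eps1 scale1r.
rewrite (@Psi_valid s i 1 1); last by rewrite /= d1.
by rewrite big_ord1 expr0 mul1r D0 IH.
Qed.

Lemma tcomm1 (i l : 'I_m) c : (i < l)%N -> t l * t i ^+ c = q i l ^+ c *: (t i ^+ c * t l).
Proof.
move=> hil; elim: c => [|c IH]; first by rewrite !expr0 mulr1 mul1r scale1r.
rewrite exprSr mulrA IH -scalerAl -[t i ^+ c * t l * t i]mulrA ht // -scalerAr scalerA mulrA -exprSr.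
by rewrite -exprSr.
Qed.

Lemma tcomm (i l : 'I_m) c e : (i < l)%N ->
  t l ^+ e * t i ^+ c = q i l ^+ (c * e) *: (t i ^+ c * t l ^+ e).
Proof.
move=> hil; elim: e => [|e IH]; first by rewrite !expr0 muln0 expr0 mulr1 mul1r scale1r.
rewrite exprS -mulrA IH -scalerAr [t l * (_ * _)]mulrA tcomm1 // -scalerAl [t i ^+ c * (t l * _)]mulrA scalerA.
by rewrite -exprD mulnS addnC.
Qed.

Lemma twist s (i : 'I_m) c z : all (fun l : 'I_m => (i < l)%N) s ->
  t i ^+ c * Psi s (P i c z) = Psi s z * t i ^+ c.
Proof.
elim: s z => [|l s IH] z.
  by move=> _ /=; rewrite eps_P -scalerAr mulr1 -scalerAl mul1r.
move=> /andP [hil hs].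
have h0 : iter (nilidx l z) (d l) (P i c z) = 0.
  by rewrite iterdP nilidx0 (lin0 (P_lin i c)) scaler0.
rewrite (Psi_valid s h0) /= mulr_sumr mulr_suml; apply: eq_bigr => e _.
rewrite DP Psi_Z -!scalerAr mulrA scalerAl -tcomm // -[_ * t i ^+ c * _]mulrA IH //.
by rewrite mulrA.
Qed.

Lemma Psi_mul s x y : sorted (fun i j : 'I_m => (i < j)%N) s ->
  Psi s (x * y) = Psi s x * Psi s y.
Proof.
elim: s x y => [|i s IH] x y hs.
  by rewrite /= eps_mul -scalerAl mul1r scalerA.
have hs' := path_sorted hs.
have hall : all (fun l : 'I_m => (i < l)%N) s.
  by apply: (order_path_min _ hs) => a b c; apply: ltn_trans.
set nx := nilidx i x; set ny := nilidx i y.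
set N := (nx + ny + nilidx i (x * y))%N.
have hz : forall z, (nilidx i z <= N)%N -> iter N (d i) z = 0.
  by move=> z hz; apply: iter_zero (d_lin i) (nilidx0 i z) hz.
have h1 : iter N (d i) x = 0 by apply: hz; rewrite /N /nx; lia.
have h2 : iter N (d i) y = 0 by apply: hz; rewrite /N /ny; lia.
have h3 : iter N (d i) (x * y) = 0 by apply: hz; rewrite /N; lia.
rewrite (Psi_valid s h1) (Psi_valid s h2) (Psi_valid s h3).
rewrite -(@cauchy _ (fun b => t i ^+ b * Psi s (D i b x))
                   (fun c => t i ^+ c * Psi s (D i c y)) nx ny); first last.
- by move=> c hc; rewrite D_zero' // Psi0 mulr0.
- by move=> b hb; rewrite D_zero' // Psi0 mulr0.
- by rewrite /N leq_addr.
apply: eq_bigr => a _; rewrite leibniz Psi_sum mulr_sumr; apply: eq_bigr => j _.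
have hj : (j <= a)%N by rewrite -ltnS.
rewrite IH // -{1}(subnK hj) exprD -!mulrA (mulrA (t i ^+ j)) twist //.
by rewrite !mulrA.
Qed.

Fixpoint SB (s : seq 'I_m) (N : nat) (x : A) : Prop :=
  match s with
  | [::] => True
  | i :: s' => iter N (d i) x = 0 /\ forall j, SB s' N (iter j (d i) x)
  end.

Lemma SB0 s N : SB s N 0.
Proof.
elim: s => [|i s IH] //=; split; first exact: iter0 (d_lin i).
by move=> j; rewrite iter0 //; apply: d_lin.
Qed.

Lemma SB_scale s N c x : SB s N x -> SB s N (c *: x).
Proof.
elim: s x => [|i s IH] x //= [h1 h2]; split.
  by rewrite (linZ _ _ (lin_iter N (d_lin i))) h1 scaler0.
by move=> j; rewrite (linZ _ _ (lin_iter j (d_lin i))); apply: IH.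
Qed.

Lemma SB_mono s N N' x : SB s N x -> (N <= N')%N -> SB s N' x.
Proof.
elim: s x => [|i s IH] x //= [h1 h2] hN; split.
  exact: iter_zero (d_lin i) h1 hN.
by move=> j; apply: IH.
Qed.

Lemma SB_ex s x : exists N, SB s N x.
Proof.
elim: s x => [|i s IH] x; first by exists 0%N.
have H : forall n, exists N, forall j, (j < n)%N -> SB s N (iter j (d i) x).
  elim=> [|n [N1 h1]]; first by exists 0%N.
  have [N2 h2] := IH (iter n (d i) x).
  exists (maxn N1 N2) => j; rewrite ltnS leq_eqVlt => /orP [/eqP -> | hj].
    by apply: SB_mono h2 _; apply: leq_maxr.
  by apply: SB_mono (h1 j hj) _; apply: leq_maxl.
have [N hN] := H (nilidx i x).
exists (maxn (nilidx i x) N); split.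
  by apply: iter_zero (d_lin i) (nilidx0 i x) _; apply: leq_maxl.
move=> j; case: (ltnP j (nilidx i x)) => hj.
  by apply: SB_mono (hN j hj) _; apply: leq_maxr.
by rewrite (iter_zero (d_lin i) (nilidx0 i x) hj); apply: SB0.
Qed.

Lemma fold0 s (a : 'I_m -> nat) : foldl (fun z i => D i (a i) z) 0 s = 0.
Proof.
elim: s => [|i s IH] //=.
by rewrite (lin0 (D_lin i (a i))).
Qed.

Lemma fold_vanish s N (a : 'I_m -> nat) y : SB s N y ->
  (exists2 i, i \in s & (N <= a i)%N) -> foldl (fun z i => D i (a i) z) y s = 0.
Proof.
elim: s y => [|i0 s IH] y; first by move=> _ [i]; rewrite in_nil.
move=> [h1 h2] [i]; rewrite in_cons => /orP [/eqP -> | his] hi /=.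
  by rewrite D_zero ?fold0 //; apply: iter_zero (d_lin i0) h1 hi.
apply: IH; last by exists i.
by rewrite /D /dpow; apply: SB_scale; apply: h2.
Qed.

Lemma SB_coef N x : SB (enum 'I_m) N x -> coef_support_in_box q d eps N x.
Proof.
move=> h a [i hi]; rewrite /Phi_coef /dcomp.
have := @fold_vanish (enum 'I_m) N a x h.
rewrite /D => ->; first exact: eps0.
by exists i; rewrite ?mem_enum.
Qed.

Definition upd M (a0 : {ffun 'I_m -> 'I_M}) (i : 'I_m) (c : 'I_M) : {ffun 'I_m -> 'I_M} :=
  [ffun j => if j == i then c else a0 j].

Fixpoint Nest M (G : {ffun 'I_m -> 'I_M} -> B) (s : seq 'I_m) (a0 : {ffun 'I_m -> 'I_M}) : B :=
  match s with
  | [::] => G a0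
  | i :: s' => \sum_(c : 'I_M) Nest G s' (upd a0 i c)
  end.

Lemma Nest_sum M G s (a0 : {ffun 'I_m -> 'I_M}) : uniq s ->
  Nest G s a0 = \sum_(a : {ffun 'I_m -> 'I_M} | [forall j, (j \notin s) ==> (a j == a0 j)]) G a.
Proof.
elim: s a0 => [|i s IH] a0 /=.
  move=> _; rewrite (eq_bigl (fun a => a == a0)) ?big_pred1_eq // => a.
  apply/forallP/eqP => [h | ->]; last by [].
  by apply/ffunP => j; apply/eqP; apply: h.
move=> /andP [his hu].
rewrite [RHS](partition_big (fun a : {ffun 'I_m -> 'I_M} => a i) xpredT) //=; apply: eq_bigr => c _.
rewrite IH //; apply: eq_bigl => a.
apply/idP/idP.
  move/forallP => h; apply/andP; split.
    apply/forallP => j; apply/implyP; rewrite in_cons negb_or => /andP [hji hj].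
    by have := implyP (h j) hj; rewrite ffunE (negbTE hji).
  by have := implyP (h i) his; rewrite ffunE eqxx.
case/andP => /forallP h /eqP hc; apply/forallP => j; apply/implyP => hj.
rewrite ffunE; case: (eqVneq j i) => [->|hji]; first by rewrite hc.
by apply: (implyP (h j)); rewrite in_cons negb_or hji hj.
Qed.

Lemma Nest_cong M (G G' : {ffun 'I_m -> 'I_M} -> B) (s : seq 'I_m) (a0 : {ffun 'I_m -> 'I_M}) :
  (forall a : {ffun 'I_m -> 'I_M}, (forall j, j \notin s -> a j = a0 j) -> G a = G' a) ->
  Nest G s a0 = Nest G' s a0.
Proof.
elim: s a0 => [|i s IH] a0 h /=; first by apply: h.
apply: eq_bigr => c _; apply: IH => a ha; apply: h => j.
rewrite in_cons negb_or => /andP [hji hj].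
by rewrite ha // ffunE (negbTE hji).
Qed.

Definition Fg M (s : seq 'I_m) (L : B) (y : A) (a : {ffun 'I_m -> 'I_M}) : B :=
  eps (foldl (fun z i => D i (a i) z) y s) *: (L * \prod_(i <- s) t i ^+ (a i)).

Lemma Nest_Psi M s : uniq s -> forall y, SB s M y ->
  forall (a0 : {ffun 'I_m -> 'I_M}) L, Nest (Fg s L y) s a0 = L * Psi s y.
Proof.
elim: s => [|i s IH].
  by move=> _ y _ a0 L; rewrite /Fg /= big_nil mulr1 -scalerAr mulr1.
move=> /andP [his hu] y [hM hSB] a0 L.
rewrite (Psi_valid s hM) mulr_sumr /=; apply: eq_bigr => c _.
rewrite (@Nest_cong _ _ (Fg s (L * t i ^+ c) (D i c y))).
  rewrite IH // ?mulrA //.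
  by rewrite /D /dpow; apply: SB_scale; apply: hSB.
move=> a ha.
have hai : a i = c by rewrite ha // ffunE eqxx.
by rewrite /Fg /= big_cons hai mulrA.
Qed.

Lemma box_Nest M x : SB (enum 'I_m) M.+1 x ->
  Phi_box q d eps t M.+1 x = Psi (enum 'I_m) x.
Proof.
move=> h.
rewrite -(mul1r (Psi _ x)) -(@Nest_Psi M.+1 _ (enum_uniq _) x h [ffun => ord0]).
rewrite Nest_sum ?enum_uniq // /Phi_box.
rewrite [RHS](eq_bigl xpredT); last by move=> a; apply/forallP => j; rewrite mem_enum.
apply: eq_bigr => a _; rewrite /Fg mul1r; congr (_ *: _).
by rewrite enumT unlock.
Qed.

Lemma box_mono N M x : (N <= M)%N -> coef_support_in_box q d eps N x ->
  Phi_box q d eps t N x = Phi_box q d eps t M x.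
Proof.
move=> hNM hbox.
pose h := fun a : {ffun 'I_m -> 'I_N} => [ffun i => widen_ord hNM (a i)] : {ffun 'I_m -> 'I_M}.
rewrite /Phi_box [RHS](bigID (fun a => a \in [set h a0 | a0 in setT])) /=.
rewrite [X in _ = _ + X]big1 ?addr0.
  rewrite big_imset /=; last first.
    move=> a1 a2 _ _ /ffunP hh; apply/ffunP => i; apply/val_inj.
    by have := congr1 val (hh i); rewrite !ffunE.
  apply: eq_big => [a|a _]; first by rewrite in_setT.
  congr (_ *: _).
    congr (Phi_coef _ _ _ _ _); apply: functional_extensionality => i.
    by rewrite ffunE.
  by apply: eq_bigr => i _; rewrite ffunE.
move=> a ha.
case: (boolP [forall i, (a i < N)%N]) => [/forallP hall | /forallPn [i hi]].
  exfalso; move/negP: ha; apply; apply/imsetP.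
  exists [ffun i => Ordinal (hall i)]; first by rewrite in_setT.
  by apply/ffunP => i; apply/val_inj; rewrite !ffunE.
by rewrite hbox ?scale0r //; exists i; rewrite leqNgt.
Qed.

Lemma main_sec : exists Phi : A -> B,
    [/\ forall x : A, exists N : nat, coef_support_in_box q d eps N x,
        forall (x : A) (N : nat), coef_support_in_box q d eps N x ->
          Phi x = Phi_box q d eps t N x
      & is_alg_hom Phi].
Proof.
exists (Psi (enum 'I_m)); split.
- move=> x; have [N hN] := SB_ex (enum 'I_m) x; exists N; exact: SB_coef.
- move=> x N hbox; have [M0 hM0] := SB_ex (enum 'I_m) x.
  have hM : SB (enum 'I_m) (maxn M0 N).+1 x.
    by apply: SB_mono hM0 _; lia.
  rewrite (@box_mono N (maxn M0 N).+1 x _ hbox) ?box_Nest //; lia.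
- split; [exact: Psi_lin | exact: Psi_one | ].
  move=> x y; apply: Psi_mul.
  have := iota_ltn_sorted 0 m; rewrite -val_enum_ord sorted_map.
  by [].
Qed.

End Main.

Theorem mainTheorem13 (k : fieldType) (A : algType k) (m : nat)
  (phi d : 'I_m -> A -> A) (q : 'M[k]_m) (eps : A -> k) :
  is_domain A ->
  (forall i, is_alg_aut (phi i)) ->
  (forall i, is_skew_der (phi i) (d i)) ->
  (forall i, locally_nilpotent (d i)) ->
  (forall i l : 'I_m, forall x : A, d l (phi i x) = q i l *: phi i (d l x)) ->
  (forall i l : 'I_m, q i l != 0) ->
  (forall i : 'I_m, ~ is_root_of_unity_q (q i i)) ->
  is_alg_char eps ->
  (forall i x, eps (phi i x) = eps x) ->
  forall (B : algType k) (t : 'I_m -> B),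
  (forall i l : 'I_m, (i < l)%N -> t l * t i = q i l *: (t i * t l)) ->
  exists Phi : A -> B,
    [/\ forall x : A, exists N : nat, coef_support_in_box q d eps N x,
        forall (x : A) (N : nat), coef_support_in_box q d eps N x ->
          Phi x = Phi_box q d eps t N x
      & is_alg_hom Phi].
Proof.
move=> _ hphi hder hnil hcomm _ hroot heps hepsphi B t ht.
exact: (main_sec hphi hder hnil hcomm hroot heps hepsphi ht).
Qed.
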